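(* Let $d\ge1$, $k\in\mathbb N$, $K\in\mathbb R$, and let $\alpha_k$, $g_k$ and the admissible range of $n$ be as in the statement recalled in the context; in particular $\inf_k\alpha_k^{1/k}>0$. For any measurable $A\subset\mathcal C[K,K+d]$ and any admissible $n$, writing $a=\mathcal B^{[K,K+d]}_{1;0,0}(A)$, $$\mathbb P\big(\mathcal L_n^{[K,K+d]}(k,\cdot)\in A\big)\le a\cdot49\,e^{189\alpha_k^{-5}}\exp\Big\{\alpha_k^{-5/6}\Big(\log\big(a^{-1}(4g_k\vee1)\big)\Big)^{5/6}\Big\}.$$
   Context: Notation: $\wedge=\min$, $\vee=\max$. Setting: $\{\mathcal L_n:[\![1,n]\!]\times[-z_n,\infty)\to\mathbb R\}$ is a $\bar\varphi$-regular sequence of Brownian Gibbs line ensembles with constant parameters $(c,C)$, meaning: each $\mathcal L_n$ is ordered and its conditional law on $[\![1,k]\!]\times(a,b)$ given the rest is that of $k$ independent Brownian bridges (diffusion parameter one) between the observed endpoint values, conditioned to remain strictly ordered and above $\mathcal L_n(k+1,\cdot)$ (no lower constraint if $k=n$); and for every $n$: $z_n\ge cn^{\varphi_1}$; for $z\ge-z_n$ with $|z|\le cn^{\varphi_2}$, $\mathbb P(\mathcal L_n(1,z)+2^{-1/2}z^2\le-s)\le Ce^{-cs^{3/2}}$ for $s\in[1,n^{\varphi_3}]$ and $\mathbb P(\mathcal L_n(1,z)+2^{-1/2}z^2\ge s)\le Ce^{-cs^{3/2}}$ for $s\ge1$. $\mathcal C[K,K+d]$: continuous functions on $[K,K+d]$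 vanishing at the endpoints; $\mathcal B^{[K,K+d]}_{1;0,0}$: Brownian bridge law on $[K,K+d]$ vanishing at the endpoints; $\mathcal L_n^{[K,K+d]}(k,x)=\mathcal L_n(k,x)-\tfrac{K+d-x}{d}\mathcal L_n(k,K)-\tfrac{x-K}{d}\mathcal L_n(k,K+d)$. Constants: $c_1=2^{-5/2}c\wedge1/8$, $c_k=((3-2^{3/2})^{3/2}10^{-3/2})^{k-1}c_1$, $C_k=\max\{10\cdot20^{k-1}5^{k/2}(10/(3-2^{3/2}))^{k(k-1)/2}C,e^{c/2}\}$, $D_k=\max\{c_k^{-1/3}(2^{-9/2}-2^{-5})^{-1/3},36(k^2-1),32c_k^{-1}(k^2-1)\}$, $\theta=\varphi_1\wedge\varphi_2$, $\alpha_k=D_k^{-2/5}d^{-6/5}k^{-21/5}/46481$. An $n$ is admissible if $[K,K+d]\subset\tfrac c2[-n^\theta,n^\theta]$, $n\ge k\vee(2c)^{-2\theta^{-1}}\vee(2c^{-1}(K+d))^{1/\theta}$ and $n^{\varphi_1\wedge\varphi_2\wedge(\varphi_3/2)}\ge(c/2\wedge2^{1/2})^{-1}D_k(\log\varepsilon^{-1})^{1/3}$ with $2\varepsilon=18^{-3/2}C_k^{-3/2}D_k^{-3/2}\wedge\exp\{-2\cdot10^7k^{3/2}d^6\}$. With $f_{n,k}$ the Radon–Nikodym derivative of the law of $\mathcal L_n^{[K,K+d]}(k,\cdot)$ with respect to $\mathcal B^{[K,K+d]}_{1;0,0}$, $g_k=\sup_{n\text{ admissible}}\int\exp\{\alpha_k(\log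 f_{n,k})^{6/5}\}\,d\mathcal B^{[K,K+d]}_{1;0,0}$, which is finite. *)

(* Defs.v *)
From HB Require Import structures.
From mathcomp Require Import all_boot all_order all_algebra.
From mathcomp Require Import all_classical all_reals all_analysis.
Unset Printing Implicit Defensive.
Import Order.TTheory GRing.Theory Num.Theory.
Import numFieldNormedType.Exports.
Local Open Scope classical_set_scope.
Local Open Scope ring_scope.

Section defs.
Context {R : realType}.

(* C[K,K+d]: continuous functions on [K,K+d] vanishing at the endpoints;
   represented as functions R -> R that are continuous on [K,K+d], vanish at
   K and K+d, and (canonical extension) vanish outside [K,K+d]. *)
Definition is_cpath (K d : R) (f : R -> R) : Prop :=
  {within [set x | K <= x <= K + d], continuous f} /\ f K = 0 /\ f (K + d) = 0 /\
  (forall x, ~ (K <= x <= K + d) -> f x = 0).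

Lemma is_cpath0 K d : is_cpath K d (fun _ => 0).
Proof.
split; last by [].
by apply: continuous_subspaceT => x; exact: cst_continuous.
Qed.

Definition cpath (K d : R) := {f : R -> R | is_cpath K d f}.

HB.instance Definition _ K d := gen_eqMixin (cpath K d).
HB.instance Definition _ K d := gen_choiceMixin (cpath K d).
HB.instance Definition _ K d :=
  isPointed.Build (cpath K d) (exist _ (fun _ => 0) (is_cpath0 K d)).

(* cylinder sets: the sigma-algebra generated by the evaluation maps
   (this is the Borel sigma-algebra of the sup norm on C[K,K+d]) *)
Definition cpath_cyl (K d : R) : set (set (cpath K d)) :=
  [set (fun f : cpath K d => sval f t) @^-1` S | t in [set: R] & S in [set S : set R | measurable S]].

Definition cpathM (K d : R) := g_sigma_algebraType (cpath_cyl K d).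

Definition gaussian_law (m v : R) : set R -> \bar R :=
  if v == 0 then \d_m else normal_prob m (Num.sqrt v).

Definition bb_cov (K d s t : R) : R :=
  (Num.min s t - K) * (K + d - Num.max s t) / d.

(* B is the Brownian bridge law B^{[K,K+d]}_{1;0,0} (diffusion parameter one):
   the centred Gaussian process on [K,K+d] with covariance bb_cov, i.e. every
   finite linear combination of evaluations is centred Gaussian with the
   corresponding variance. *)
Definition is_brownian_bridge (K d : R) (B : probability (cpathM K d) R) : Prop :=
  forall (m : nat) (t : 'I_m -> R) (lam : 'I_m -> R),
    (forall i, K <= t i <= K + d) ->
    forall S : set R, measurable S ->
      B ((fun f : cpathM K d => \sum_(i < m) lam i * sval f (t i)) @^-1` S) =
      gaussian_law 0 (\sum_(i < m) \sum_(j < m) lam i * lam j * bb_cov K d (t i) (t j)) S.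

Definition c_1 (c : R) : R := Num.min (2 `^ (- (5 / 2)) * c) (1 / 8).
Definition c_k (c : R) (k : nat) : R :=
  ((3 - 2 `^ (3 / 2)) `^ (3 / 2) * 10 `^ (- (3 / 2))) ^+ k.-1 * c_1 c.
Definition C_k (c C : R) (k : nat) : R :=
  Num.max (10 * 20 ^+ k.-1 * 5 `^ (k%:R / 2)
             * (10 / (3 - 2 `^ (3 / 2))) `^ (k%:R * (k%:R - 1) / 2) * C)
          (expR (c / 2)).
Definition D_k (c : R) (k : nat) : R :=
  Num.max (Num.max ((c_k c k) `^ (- (1 / 3)) * (2 `^ (- (9 / 2)) - 2 `^ (-5)) `^ (- (1 / 3)))
                   (36 * (k%:R ^+ 2 - 1)))
          (32 * (c_k c k)^-1 * (k%:R ^+ 2 - 1)).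
Definition alpha_k (c d : R) (k : nat) : R :=
  (D_k c k) `^ (- (2 / 5)) * d `^ (- (6 / 5)) * k%:R `^ (- (21 / 5)) / (53 * 877).
Definition eps_k (c C d : R) (k : nat) : R :=
  Num.min (18 `^ (- (3 / 2)) * (C_k c C k) `^ (- (3 / 2)) * (D_k c k) `^ (- (3 / 2)))
          (expR (- (2 * 10 ^+ 7 * k%:R `^ (3 / 2) * d ^+ 6))) / 2.

Definition admissible (c C phi1 phi2 phi3 K d : R) (k n : nat) : Prop :=
  let theta := Num.min phi1 phi2 in
  [set x | K <= x <= K + d] `<=`
     [set x | - (c / 2 * n%:R `^ theta) <= x <= c / 2 * n%:R `^ theta] /\
  (k <= n)%N /\
  (2 * c) `^ (- (2 * theta^-1)) <= n%:R /\
  (2 * c^-1 * (K + d)) `^ (theta^-1) <= n%:R /\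
  (Num.min (c / 2) (Num.sqrt 2))^-1 * D_k c k * (ln ((eps_k c C d k)^-1)) `^ (1 / 3)
     <= n%:R `^ (Num.min (Num.min phi1 phi2) (phi3 / 2)).

End defs.

(* Main.v *)
Require Import Defs.
From HB Require Import structures.
From mathcomp Require Import all_boot all_order all_algebra.
From mathcomp Require Import all_classical all_reals all_analysis.
From mathcomp Require Import ring lra.
From mathcomp Require Import measurable_realfun.
Import Order.TTheory GRing.Theory Num.Theory.
Import numFieldNormedType.Exports.
Local Open Scope classical_set_scope.
Local Open Scope ring_scope.

Section S.
Variable R : realType.

Lemma powR_gt0' (a x : R) : a != 0 -> 0 < a `^ x.
Proof. by move=> a0; rewrite /powR (negbTE a0) expR_gt0. Qed.

Lemma two32_neq3 : (2:R) `^ (3/2) != 3.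
Proof.
apply/eqP => h.
have : ((2:R) `^ (3/2)) `^ 2 = 3 `^ 2 by rewrite h.
rewrite -powRrM.
have -> : (3/2 * 2 : R) = 3%:R by field.
rewrite !powR_mulrn //.
move/eqP; rewrite -subr_eq0; apply/negP.
have -> : (2:R) ^+ 3 - 3 ^+ 2 = -1 by rewrite !exprS expr0; lra.
by rewrite oppr_eq0 oner_eq0.
Qed.

Lemma two_pow_neq : (2:R) `^ (- (9 / 2)) - 2 `^ (-5) != 0.
Proof.
rewrite subr_eq0 /powR pnatr_eq0 /=; apply/negP => /eqP /expR_inj.
move/eqP; rewrite -subr_eq0 -mulrBl mulf_eq0 => /orP[/eqP h|/eqP h].
  lra.
have : (0:R) < ln 2 by apply: ln_gt0; lra.
lra.
Qed.

Lemma alpha_pos (c d : R) k : 0 < c -> 1 <= d -> (1 <= k)%N -> 0 < alpha_k c d k.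
Proof.
move=> hc hd hk.
have ck : c_k c k != 0.
  rewrite /c_k mulf_neq0 //.
    rewrite expf_neq0 // mulf_neq0 //.
      apply/negP => /eqP/powR_eq0_eq0/eqP; rewrite subr_eq0 eq_sym.
      by apply/negP; exact: two32_neq3.
  apply: lt0r_neq0; rewrite /c_1 lt_min; apply/andP; split; last lra.
  by apply: mulr_gt0 => //; apply: powR_gt0; lra.
have Dk : 0 < D_k c k.
  rewrite /D_k lt_max; apply/orP; left; rewrite lt_max; apply/orP; left.
  by apply: mulr_gt0; apply: powR_gt0'; [exact: ck| exact: two_pow_neq].
rewrite /alpha_k; apply: mulr_gt0; last by rewrite invr_gt0; lra.
apply: mulr_gt0; [apply: mulr_gt0|]; apply: powR_gt0 => //; first lra.
by rewrite ltr0n.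
Qed.

Lemma pointwise_key (al Lg y : R) : 0 < al -> 0 <= Lg ->
  let u := al `^ (- (5 / 6)) * Lg `^ (5 / 6) in
  let w := al `^ (-5) in
  0 < y -> u + w < y ->
  y <= u + w - Lg + al * y `^ (6 / 5).
Proof.
move=> hal L0 u w ypos Ty.
have ud : u = al `^ (- (5 / 6)) * Lg `^ (5 / 6) by [].
have wd : w = al `^ (-5) by [].
clearbody u w.
move: Ty; set T := u + w => Ty.
have Td : T = u + w by [].
clearbody T.
have u0 : 0 <= u by rewrite ud mulr_ge0 // powR_ge0.
have w0 : 0 <= w by rewrite wd powR_ge0.
have wpos : 0 < w by rewrite wd powR_gt0.
have Tpos : 0 < T by rewrite Td; lra.
have hTw : w <= T by rewrite Td; lra.
have hTu0 : u <= T by rewrite Td; lra.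
have e65 : (6 / 5 : R) = 1 / 5 + 1 by field.
have py : y `^ (6/5) = y `^ (1/5) * y.
  by rewrite e65 powRD ?powRr1 ?(ltW ypos) // gt_eqF // implybT.
have pT : T `^ (6/5) = T `^ (1/5) * T.
  by rewrite e65 powRD ?powRr1 ?(ltW Tpos) // gt_eqF // implybT.
have hq : T `^ (1/5) <= y `^ (1/5).
  by apply: ge0_ler_powR; rewrite ?nnegrE; lra.
have hp : al^-1 <= T `^ (1/5).
  have -> : al^-1 = w `^ (1/5).
    rewrite wd -powRrM (_ : -5 * (1/5) = -1 :> R); last by field.
    by rewrite powR_inv1 // ltW.
  by apply: ge0_ler_powR; rewrite ?nnegrE; lra.
have hap : 1 <= al * T `^ (1/5).
  by have := ler_wpM2l (ltW hal) hp; rewrite mulfV // lt0r_neq0.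
have hu : al * u `^ (6/5) = Lg.
  rewrite ud powRM ?powR_ge0 // -!powRrM.
  rewrite (_ : - (5/6) * (6/5) = -1 :> R); last by field.
  rewrite (_ : (5/6) * (6/5) = 1 :> R); last by field.
  rewrite powR_inv1 ?(ltW hal) // powRr1 // mulrA mulfV ?mul1r //.
  exact: lt0r_neq0.
have hTu : u `^ (6/5) <= T `^ (6/5) by apply: ge0_ler_powR; rewrite ?nnegrE; lra.
have hL : Lg <= al * (T `^ (1/5) * T) by rewrite -pT -hu ler_wpM2l // ltW.
have k1 : al * (T `^ (1/5) * y) <= al * (y `^ (1/5) * y).
  by rewrite ler_wpM2l ?(ltW hal) // ler_wpM2r // ltW.
have k2 : 0 <= (al * T `^ (1/5) - 1) * (y - T) by rewrite mulr_ge0 //; lra.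
have k3 : (al * T `^ (1/5) - 1) * (y - T) = al * (T `^ (1/5) * y) - al * (T `^ (1/5) * T) - y + T by ring.
rewrite py; lra.
Qed.

Lemma final_ineq (a g G u w : R) : 0 < a -> 4 * g <= G -> 1 <= G -> 0 <= w ->
  expR (u + w) * a + (expR (u + w) * a / G) * g <= a * 49 * expR (189 * w) * expR u.
Proof.
move=> apos G4 G1 w0.
set T := u + w.
set eps := expR T * a / G.
have a0 : 0 <= a by lra.
have hgG : g / G <= 1 / 4.
  rewrite ler_pdivrMr; last lra.
  lra.
have -> : eps * g = (expR T * a) * (g / G) by rewrite /eps; ring.
have E0 : 0 <= expR T * a by rewrite mulr_ge0 // expR_ge0.
have hh1 : (expR T * a) * (g / G) <= (expR T * a) * (1 / 4) by rewrite ler_wpM2l.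
have hw : expR w <= expR (189 * w) by rewrite ler_expR; lra.
have eu : 0 < expR u by exact: expR_gt0.
have ew : 0 < expR w by exact: expR_gt0.
rewrite /T expRD.
have hh2 : a * expR u * expR w <= a * expR u * expR (189 * w).
  by rewrite ler_wpM2l // mulr_ge0 // ltW.
have hh3 : 0 <= a * expR u * expR w by rewrite !mulr_ge0 // ltW.
have -> : expR u * expR w * a = a * expR u * expR w by ring.
move: hh1; rewrite /T expRD.
have -> : expR u * expR w * a = a * expR u * expR w by ring.
have -> : a * 49 * expR (189 * w) * expR u = 49 * (a * expR u * expR (189 * w)) by ring.
lra.
Qed.
End S.

Theorem corollary4p6 (R : realType)
  (c C phi1 phi2 phi3 : R) (z : nat -> R)
  (dO : nat -> measure_display) (Omega : forall n : nat, measurableType (dO n))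
  (P : forall n : nat, probability (Omega n) R)
  (L : forall n : nat, Omega n -> nat -> R -> R)
  (K d : R) (k : nat)
  (B : probability (cpathM K d) R)
  (X : forall n : nat, Omega n -> cpathM K d)
  (f : nat -> cpathM K d -> R) :
  0 < c -> 0 < C -> 0 < phi1 -> 0 < phi2 -> 0 < phi3 ->
  (* the line ensembles L_n : [1,n] x [-z_n, oo) -> R *)
  (forall n, c * n%:R `^ phi1 <= z n) ->
  (forall n i x, measurable_fun [set: Omega n] (fun w => L n w i x)) ->
  (forall n w i, (1 <= i <= n)%N -> {within [set x | - z n <= x], continuous (L n w i)}) ->
  (forall n w i x, (1 <= i)%N -> (i < n)%N -> - z n <= x -> L n w i.+1 x < L n w i x) ->
  (* one-point tail bounds *)
  (forall n x, - z n <= x -> `|x| <= c * n%:R `^ phi2 ->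
     (forall s, 1 <= s <= n%:R `^ phi3 ->
        (P n [set w | (L n w 1%N x + 2 `^ (- (1 / 2)) * x ^+ 2 <= - s)%R]
          <= (C * expR (- (c * s `^ (3 / 2))))%:E)%E) /\
     (forall s, 1 <= s ->
        (P n [set w | (s <= L n w 1%N x + 2 `^ (- (1 / 2)) * x ^+ 2)%R]
          <= (C * expR (- (c * s `^ (3 / 2))))%:E)%E)) ->
  (* parameters *)
  1 <= d -> (1 <= k)%N ->
  is_brownian_bridge K d B ->
  (* X n = L_n^{[K,K+d]}(k, .) *)
  (forall n w x, K <= x <= K + d ->
     sval (X n w) x = L n w k x - (K + d - x) / d * L n w k K - (x - K) / d * L n w k (K + d)) ->
  (forall n, measurable_fun [set: Omega n] (X n)) ->
  (* f n = f_{n,k}: Radon-Nikodym derivative of the law of X n w.r.t. B *)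
  (forall n, measurable_fun [set: cpathM K d] (f n)) ->
  (forall n x, 0 <= f n x) ->
  (forall n (A : set (cpathM K d)), measurable A ->
     P n (X n @^-1` A) = (\int[B]_(x in A) (f n x)%:E)%E) ->
  forall g : R,
  ereal_sup [set (\int[B]_x (expR (alpha_k c d k
                     * (Num.max (ln (f n x)) 0) `^ (6 / 5)))%:E)%E
            | n in admissible c C phi1 phi2 phi3 K d k] = g%:E ->
  forall (A : set (cpathM K d)) (n : nat), measurable A ->
  admissible c C phi1 phi2 phi3 K d k n ->
  let a := fine (B A) in
  (P n (X n @^-1` A) <=
     (a * 49 * expR (189 * (alpha_k c d k) `^ (-5))
        * expR ((alpha_k c d k) `^ (- (5 / 6))
                * (ln (a^-1 * Num.max (4 * g) 1)) `^ (5 / 6)))%:E)%E.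
Proof.
move=> hc hC h1 h2 h3 hz hLm hLc hLo htail hd hk hB hX hXm hfm hf0 hPf g hg A n mA hadm.
cbv zeta.
set a := fine (B A).
set al := alpha_k c d k.
have hal : 0 < al by apply: alpha_pos.
have BAfin : B A \is a fin_num.
  by rewrite ge0_fin_numE // (le_lt_trans (probability_le1 _ mA)) // ltry.
have hBA : B A = a%:E by rewrite /a fineK.
have a1 : a <= 1 by rewrite -lee_fin -hBA probability_le1.
have a0 : 0 <= a by rewrite -lee_fin -hBA measure_ge0.
rewrite hPf //.
have mfE : measurable_fun [set: cpathM K d] (fun x => (f n x)%:E).
  exact/measurable_EFinP.
have [aeq0|apos] : a = 0 \/ 0 < a by move: a0; rewrite le_eqVlt => /orP[/eqP<-|->]; [left|right].
  rewrite aeq0 !mul0r null_set_integral //.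
    exact: (measurable_funS measurableT (@subsetT _ A) mfE).
  by have := hBA; rewrite aeq0.
set G := Num.max (4 * g) 1.
have G1 : 1 <= G by rewrite /G le_max lexx orbT.
have G4 : 4 * g <= G by rewrite /G le_max lexx.
set Lg := ln (a^-1 * G).
have aG : 1 <= a^-1 * G.
  rewrite -(mulr1 1) ler_pM //; first by rewrite invr_ge1 // unitfE gt_eqF.
have aGpos : 0 < a^-1 * G by lra.
have L0 : 0 <= Lg by rewrite /Lg ln_ge0.
set u := al `^ (- (5 / 6)) * Lg `^ (5 / 6).
set w := al `^ (-5).
set T := u + w.
have u0 : 0 <= u by rewrite /u mulr_ge0 // powR_ge0.
have w0 : 0 <= w by rewrite /w powR_ge0.
have wpos : 0 < w by rewrite /w powR_gt0.
have Tpos : 0 < T by rewrite /T; lra.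
have hTw : w <= T by rewrite /T; lra.
have hTu0 : u <= T by rewrite /T; lra.
set eps := expR T * a / G.
have eps0 : 0 <= eps by rewrite /eps divr_ge0 // ?mulr_ge0 ?expR_ge0 //; lra.
set phi := fun x => expR (al * (Num.max (ln (f n x)) 0) `^ (6 / 5)).
have mphi : measurable_fun [set: cpathM K d] (fun x => (phi x)%:E).
  apply/measurable_EFinP; apply: measurableT_comp; first exact: measurable_expR.
  apply: (@measurableT_comp _ _ _ _ _ _ ( *%R al)); first exact: mulrl_measurable.
  apply: (measurableT_comp (@measurable_powR R (6 / 5))).
  exact: (measurable_maxr (measurableT_comp (@measurable_ln R) (hfm n)) (measurable_cst _)).
have hpt : forall x, f n x <= expR T + eps * phi x.
  move=> x; have fx0 := hf0 n x.
  have ph0 : 0 <= phi x by rewrite /phi expR_ge0.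
  have [fle|flt] := leP (f n x) (expR T).
    have : 0 <= eps * phi x by rewrite mulr_ge0.
    lra.
  have fpos : 0 < f n x by apply: lt_trans flt; exact: expR_gt0.
  set y := ln (f n x).
  have fy : f n x = expR y by rewrite /y lnK // posrE.
  have Ty : T < y by rewrite -ltr_expR -fy.
  have ypos : 0 < y by lra.
  suff key : f n x <= eps * phi x by have := expR_ge0 T; lra.
  have heps : eps = expR (T - Lg).
    rewrite expRD expRN /Lg lnK ?posrE // /eps invfM invrK; ring.
  have hmax : Num.max y 0 = y by rewrite max_l // ltW.
  rewrite /phi -/y hmax fy heps -expRD ler_expR.
  by apply: pointwise_key => //; lra.
have mphi' : measurable_fun [set: cpathM K d] phi by apply/measurable_EFinP.
have hint : (\int[B]_(x in A) (f n x)%:E <= \int[B]_(x in A) ((expR T)%:E + eps%:E * (phi x)%:E))%E.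
  apply: ge0_le_integral => //.
  - by move=> x _; rewrite lee_fin.
  - exact: (measurable_funS measurableT (@subsetT _ A) mfE).
  - apply: (measurable_funS measurableT (@subsetT _ A)).
    have -> : (fun x => ((expR T)%:E + eps%:E * (phi x)%:E)%E) = (fun x => (expR T + eps * phi x)%:E).
      by apply: funext => x.
    apply/measurable_EFinP.
    apply: measurable_funD; first exact: measurable_cst.
    by apply: measurable_funM; first exact: measurable_cst.
  - by move=> x _; rewrite -EFinM -EFinD lee_fin hpt.
apply: (le_trans hint).
rewrite (@ge0_integralD _ _ _ B A mA (cst (expR T)%:E) (fun x => eps%:E * (phi x)%:E)%E) //; first last.
  - apply: (measurable_funS measurableT (@subsetT _ A)).
    have -> : (fun x => (eps%:E * (phi x)%:E)%E) = (fun x => (eps * phi x)%:E) by apply: funext => x.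
    apply/measurable_EFinP.
    by apply: measurable_funM; first exact: measurable_cst.
  - by move=> x _; rewrite -EFinM lee_fin mulr_ge0 // expR_ge0.
  - by move=> x _; rewrite lee_fin expR_ge0.
rewrite integral_cst // ge0_integralZl_EFin //; first last.
  exact: (measurable_funS measurableT (@subsetT _ A) mphi).
  by move=> x _; rewrite lee_fin expR_ge0.
have hphi : (\int[B]_(x in A) (phi x)%:E <= g%:E)%E.
  apply: (le_trans (ge0_subset_integral B mA measurableT mphi _ (@subsetT _ A))).
    by move=> x _; rewrite lee_fin expR_ge0.
  by rewrite -hg; apply: ereal_sup_ubound; exists n.
have -> : ((expR T)%:E * B A = (expR T * a)%:E)%E.
  by rewrite EFinM; congr (_ * _)%E; exact: hBA.
apply: (le_trans (leeD2l _ (lee_wpmul2l _ hphi))); first by rewrite lee_fin.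
rewrite -EFinM -EFinD lee_fin.
exact: final_ineq.
Qed.
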